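(* The Bell polynomials $B_n(q)=\sum_{k=0}^nS(n,k)q^k$, $n\ge 0$, form a $q$-log-convex sequence.
   Context: $S(n,k)$ is the Stirling number of the second kind (number of partitions of $\{1,\dots,n\}$ into $k$ blocks), $S(0,0)=1$. For real polynomials $f,g$ write $f\le_q g$ if $g-f$ has nonnegative coefficients; a sequence $\{P_n(q)\}_{n\ge0}$ is $q$-log-convex if $P_n(q)^2\le_q P_{n-1}(q)P_{n+1}(q)$ for all $n\ge 1$. *)

(* Defs.v *)
From mathcomp Require Import all_boot all_order all_algebra.
Set Implicit Arguments. Unset Strict Implicit. Unset Printing Implicit Defensive.
Import GRing.Theory Num.Theory.
Local Open Scope ring_scope.

(* Stirling number of the second kind: number of partitions of {0,...,n-1}
   (= 'I_n) into exactly k blocks. Note S(0,0) = 1 (the empty partition). *)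
Definition stirling2 (n k : nat) : nat :=
  #|[set P : {set {set 'I_n}} | partition P [set: 'I_n] & #|P| == k]|.

Definition bell_poly (n : nat) : {poly int} :=
  \sum_(0 <= k < n.+1) (stirling2 n k)%:R *: 'X^k.

Definition qle (f g : {poly int}) : Prop := forall i : nat, 0 <= (g - f)`_i.

Definition q_log_convex (P : nat -> {poly int}) : Prop :=
  forall n : nat, (1 <= n)%N -> qle (P n ^+ 2) (P n.-1 * P n.+1).

(* Main.v *)
Require Import Defs.
From mathcomp Require Import all_boot all_order all_algebra.
From mathcomp Require Import ring lra.
Set Implicit Arguments. Unset Strict Implicit. Unset Printing Implicit Defensive.

Section Comb.
Variable T : finType.

Definition cnt (D : {set T}) k :=
  #|[set P : {set {set T}} | partition P D & #|P| == k]|.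

Lemma cnt_set0 k : cnt set0 k = (k == 0%N).
Proof.
rewrite /cnt; case: k => [|k].
  rewrite (_ : [set P : {set {set T}} | _] = [set set0]) ?cards1 //.
  apply/setP => P; rewrite !inE partition_set0.
  by case: eqP => [->|]; rewrite ?cards0 // andbF.
rewrite (_ : [set P : {set {set T}} | _] = set0) ?cards0 //.
apply/setP => P; rewrite !inE partition_set0.
by case: eqP => [->|]; rewrite ?cards0.
Qed.

Lemma cnt_0 (D : {set T}) : D != set0 -> cnt D 0 = 0%N.
Proof.
move=> nD; rewrite /cnt (_ : [set P : {set {set T}} | _] = set0) ?cards0 //.
apply/setP => P; rewrite !inE; apply/negP => /andP[pP /eqP/cards0_eq P0].
by move: pP; rewrite P0 /partition /cover big_set0 eq_sym (negbTE nD).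
Qed.

Variables (D : {set T}) (x : T).
Hypothesis xD : x \in D.

Lemma notin_cover Q : partition Q (D :\ x) -> x \notin cover Q.
Proof. by move/cover_partition->; rewrite !inE eqxx. Qed.

Lemma x1_notin Q : partition Q (D :\ x) -> [set x] \notin Q.
Proof.
move=> pQ; apply/negP => xQ; have := notin_cover pQ.
by rewrite /cover; apply/negP/negPn/bigcupP; exists [set x]; rewrite ?set11.
Qed.

Lemma partA k :
  #|[set P : {set {set T}} | partition P D & #|P| == k.+1] :&: [set P : {set {set T}} | [set x] \in P]| = cnt (D :\ x) k.
Proof.
rewrite /cnt.
transitivity #|[set [set x] |: Q | Q in [set Q : {set {set T}} | partition Q (D :\ x) & #|Q| == k]]|; last first.
  apply: card_in_imset => Q1 Q2; rewrite !inE => /andP[p1 _] /andP[p2 _] e.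
  by rewrite -(setU1K (x1_notin p1)) e setU1K // x1_notin.
apply: eq_card => P; rewrite !inE; apply/idP/idP.
  move=> /andP[/andP[pP /eqP cP] xP]; apply/imsetP; exists (P :\ [set x]).
    rewrite inE partitionD1 //=; move: cP; rewrite (cardsD1 [set x]) xP.
    by rewrite add1n => -[->].
  by rewrite setD1K.
case/imsetP => Q; rewrite inE => /andP[pQ /eqP cQ] ->.
rewrite setU11 andbT cardsU1 x1_notin // cQ eqxx andbT.
have -> : D = [set x] :|: (D :\ x) by rewrite setD1K.
apply: partitionU1 => //; first by apply/set0Pn; exists x; rewrite set11.
by rewrite disjoints1 !inE eqxx.
Qed.

Definition psi (QB : {set {set T}} * {set T}) := (x |: QB.2) |: (QB.1 :\ QB.2).
Definition phi (P : {set {set T}}) :=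
  ((pblock P x :\ x) |: (P :\ pblock P x), pblock P x :\ x).

Lemma psiP Q B : partition Q (D :\ x) -> B \in Q ->
  [/\ partition (psi (Q, B)) D, #|psi (Q, B)| = #|Q|,
      [set x] \notin psi (Q, B) & phi (psi (Q, B)) = (Q, B)].
Proof.
move=> pQ BQ; rewrite /psi /=.
have sB := partitionS pQ BQ.
have xB : x \notin B by apply/negP => /(subsetP sB); rewrite !inE eqxx.
have nB := partition_neq0 pQ BQ.
have nQB : x |: B \notin Q :\ B.
  apply/negP => /setD1P[_ H]; have := notin_cover pQ.
  by move/negP; apply; apply/bigcupP; exists (x |: B); rewrite ?setU11.
have pP : partition ((x |: B) |: (Q :\ B)) D.
  have -> : D = (x |: B) :|: ((D :\ x) :\: B).
    apply/setP => y; rewrite !inE; have := subsetP sB y; rewrite !inE.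
    case: (y =P x) => [->|_]; rewrite ?xD //=. by case: (y \in B) => //= /(_ isT) ->.
  apply: partitionU1; first exact: partitionD1.
    by apply/set0Pn; exists x; rewrite setU11.
  rewrite -setI_eq0; apply/eqP/setP => y; rewrite !inE.
  by case: (y =P x) => //= _; case: (y \in B) => //=; rewrite andbF.
split => //.
- by rewrite cardsU1 nQB (cardsD1 B Q) BQ.
- rewrite !inE negb_or; apply/andP; split.
    apply/eqP => /setP e; case/set0Pn: nB => y yB; have := e y.
    by rewrite !inE yB orbT => /eqP ey; move: xB; rewrite -ey yB.
  by apply/negP => /andP[_ H]; move: (x1_notin pQ); rewrite H.
- have e : pblock ((x |: B) |: (Q :\ B)) x = x |: B.
    by apply: def_pblock; rewrite ?setU11 //; apply: partition_trivIset pP.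
  by rewrite /phi /= e setU1K // setU1K // setD1K.
Qed.

Lemma phiP P : partition P D -> [set x] \notin P ->
  [/\ partition (phi P).1 (D :\ x), (phi P).2 \in (phi P).1,
      #|(phi P).1| = #|P| & psi (phi P) = P].
Proof.
move=> pP nx; rewrite /phi /psi /=.
have xc : x \in cover P by rewrite (cover_partition pP).
set C := pblock P x.
have CP : C \in P by apply: pblock_mem.
have xC : x \in C by rewrite mem_pblock.
have sC := partitionS pP CP.
have nC : C :\ x != set0.
  apply/negP => /eqP e; have eC : C = [set x] by rewrite -(setD1K xC) e setU0.
  by move: nx; rewrite -eC CP.
have nCP : C :\ x \notin P :\ C.
  apply/negP => /setD1P[ne EP].
  have /trivIsetP tP := partition_trivIset pP; have := tP _ _ EP CP ne.
  rewrite -setI_eq0 (setIidPl (subsetDl _ _)); exact/negP.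
split.
- have -> : D :\ x = (C :\ x) :|: (D :\: C).
    apply/setP => y; rewrite !inE; have := subsetP sC y.
    case: (y =P x) => [->|_]; rewrite ?xC //=.
    by case: (y \in C) => //= /(_ isT) ->.
  apply: partitionU1 => //; first exact: partitionD1.
  rewrite -setI_eq0; apply/eqP/setP => y; rewrite !inE.
  by case: (y \in C); rewrite ?andbF.
- by rewrite setU11.
- by rewrite cardsU1 nCP (cardsD1 C P) CP.
- by rewrite setD1K // setU1K // setD1K.
Qed.

Lemma partB k :
  #|[set P : {set {set T}} | partition P D & #|P| == k.+1] :\: [set P : {set {set T}} | [set x] \in P]|
  = (k.+1 * cnt (D :\ x) k.+1)%N.
Proof.
pose pairs := [set QB : {set {set T}} * {set T} |
   [&& partition QB.1 (D :\ x), #|QB.1| == k.+1 & QB.2 \in QB.1]].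
transitivity #|psi @: pairs|.
  apply: eq_card => P; rewrite !inE; apply/idP/idP.
    case/andP => nx /andP[pP /eqP cP]; have [p1 p2 p3 p4] := phiP pP nx.
    by apply/imsetP; exists (phi P); rewrite // inE p1 p2 p3 cP eqxx.
  case/imsetP => [[Q B]]; rewrite inE /= => /and3P[pQ /eqP cQ BQ] ->.
  by have [p1 p2 p3 p4] := psiP pQ BQ; rewrite p3 p1 p2 cQ eqxx.
rewrite card_in_imset; last first.
  apply: (can_in_inj (g := phi)) => [[Q B]]; rewrite inE /= => /and3P[pQ _ BQ].
  by have [] := psiP pQ BQ.
rewrite -sum1_card.
rewrite (eq_bigl (fun p => (p.1 \in [set Q : {set {set T}} | partition Q (D :\ x) & #|Q| == k.+1]) && (p.2 \in p.1))); last first.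
  by move=> [Q B]; rewrite !inE /= andbA.
rewrite -(pair_big_dep _ _ (fun Q B => 1%N)) /= /cnt mulnC -sum_nat_const.
apply: eq_bigr => Q HQ; have : Q \in [set Q0 : {set {set T}} | partition Q0 (D :\ x) & #|Q0| == k.+1] := HQ.
rewrite inE => /andP[_ /eqP <-].
by rewrite sum1_card.
Qed.

Lemma cntS k : cnt D k.+1 = (k.+1 * cnt (D :\ x) k.+1 + cnt (D :\ x) k)%N.
Proof. by rewrite {1}/cnt -(cardsID [set P : {set {set T}} | [set x] \in P]) partA partB addnC. Qed.
End Comb.

Fixpoint stir (n k : nat) : nat :=
  match n, k with
  | 0, 0 => 1
  | 0, _.+1 => 0
  | _.+1, 0 => 0
  | n'.+1, k'.+1 => k'.+1 * stir n' k'.+1 + stir n' k'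
  end.

Lemma cnt_stir (T : finType) n (D : {set T}) k : #|D| = n -> cnt D k = stir n k.
Proof.
elim: n D k => [|n IH] D k cD.
  by rewrite (cards0_eq cD) cnt_set0; case: k.
have : D != set0 by rewrite -card_gt0 cD.
case/set0Pn => x xD.
have cD' : #|D :\ x| = n by move: cD; rewrite (cardsD1 x) xD add1n => -[].
case: k => [|k]; first by rewrite cnt_0 //; apply/set0Pn; exists x.
by rewrite (cntS xD) !IH.
Qed.

Lemma stir_big n k : (n < k)%N -> stir n k = 0.
Proof.
elim: n k => [|n IH] [|k] //= lt; rewrite (IH k.+1) ?(IH k) ?muln0 //; exact: ltnW.
Qed.
Import GRing.Theory Num.Theory.
Local Open Scope ring_scope.

Definition Tq (p : {poly int}) : {poly int} := 'X * (p + p^`()).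

Lemma Tq_add p q : Tq (p + q) = Tq p + Tq q.
Proof. rewrite /Tq derivD; ring. Qed.
Lemma Tq_scale (c : int) p : Tq (c *: p) = c *: Tq p.
Proof. by rewrite /Tq derivZ -scalerDr scalerAr. Qed.
Lemma Tq0 : Tq 0 = 0.
Proof. by rewrite /Tq deriv0 addr0 mulr0. Qed.
Lemma Tq_natmul p k : Tq (p *+ k) = Tq p *+ k.
Proof. by elim: k => [|k IH]; rewrite ?mulr0n ?Tq0 // !mulrS Tq_add IH. Qed.
Lemma Tq_sum (I : Type) (r : seq I) (P : pred I) (F : I -> {poly int}) :
  Tq (\sum_(i <- r | P i) F i) = \sum_(i <- r | P i) Tq (F i).
Proof.
elim: r => [|a r IH]; first by rewrite !big_nil Tq0.
by rewrite !big_cons; case: (P a); rewrite ?Tq_add IH.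
Qed.
Lemma Tq_Xn (k : nat) : Tq 'X^k = 'X^k * ('X + k%:R).
Proof.
rewrite /Tq derivXn; case: k => [|k] /=; first by rewrite mulr0n expr0 !addr0 mulr1 mul1r.
rewrite exprS; ring.
Qed.

Lemma mul_sums (I : Type) (r : seq I) (s : I -> int) (p q : I -> {poly int}) :
  (\sum_(i <- r) s i *: p i) * (\sum_(j <- r) s j *: q j) =
  \sum_(i <- r) \sum_(j <- r) (s i * s j) *: (p i * q j).
Proof.
rewrite mulr_suml; apply: eq_bigr => i _; rewrite mulr_sumr; apply: eq_bigr => j _.
by rewrite -scalerAl -scalerAr scalerA.
Qed.

Definition tt_ (i : nat) : {poly int} := 'X^i * ('X + i%:R).
Definition ww (i : nat) : {poly int} := 'X^i * ('X ^+ 2 + 'X * (2 * i + 1)%:R + (i * i)%:R).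

Lemma Tq_tt i : Tq (tt_ i) = ww i.
Proof.
rewrite /tt_ mulrDr mulr_natr Tq_add Tq_natmul -exprSr !Tq_Xn /ww.
rewrite exprS !natrD !natrM; ring.
Qed.

Lemma key (r : seq nat) (s : nat -> int) :
  let f := \sum_(i <- r) s i *: 'X^i in
  (f * Tq (Tq f) - Tq f ^+ 2) *+ 2 =
  \sum_(i <- r) \sum_(j <- r) (s i * s j) *:
     ('X^i * 'X^j * ('X *+ 2 + (i%:R - j%:R) ^+ 2)).
Proof.
move=> f.
have Tf : Tq f = \sum_(i <- r) s i *: tt_ i.
  by rewrite /f Tq_sum; apply: eq_bigr => i _; rewrite Tq_scale Tq_Xn.
have TTf : Tq (Tq f) = \sum_(i <- r) s i *: ww i.
  by rewrite Tf Tq_sum; apply: eq_bigr => i _; rewrite Tq_scale Tq_tt.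
have E1 : f * Tq (Tq f) = \sum_(i <- r) \sum_(j <- r) (s i * s j) *: ('X^i * ww j).
  by rewrite TTf /f mul_sums.
have E2 : f * Tq (Tq f) = \sum_(i <- r) \sum_(j <- r) (s i * s j) *: ('X^j * ww i).
  rewrite E1 exchange_big; apply: eq_bigr => i _; apply: eq_bigr => j _.
  by rewrite mulrC.
have E3 : Tq f ^+ 2 = \sum_(i <- r) \sum_(j <- r) (s i * s j) *: (tt_ i * tt_ j).
  by rewrite expr2 Tf mul_sums.
rewrite mulrnBl !mulr2n {1}E1 E2 E3 -!big_split -sumrB; apply: eq_bigr => i _.
rewrite -!big_split -sumrB; apply: eq_bigr => j _.
rewrite /= -!scalerDr -scalerBr; congr (_ *: _).
rewrite /ww /tt_ !natrD !natrM; ring.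
Qed.

Definition npos (p : {poly int}) := forall k, 0 <= p`_k.
Lemma npos_add p q : npos p -> npos q -> npos (p + q).
Proof. by move=> hp hq k; rewrite coefD addr_ge0. Qed.
Lemma npos_mul p q : npos p -> npos q -> npos (p * q).
Proof.
move=> hp hq k; rewrite coefM; apply: sumr_ge0 => j _; exact: mulr_ge0.
Qed.
Lemma npos_Xn n : npos 'X^n.
Proof. by move=> k; rewrite coefXn ler0n. Qed.
Lemma npos_nat n : npos n%:R.
Proof. by move=> k; rewrite coefMn coef1 mulrn_wge0 // ler0n. Qed.
Lemma npos_natmul p n : npos p -> npos (p *+ n).
Proof. by move=> hp k; rewrite coefMn mulrn_wge0. Qed.

Lemma sq_dist (i j : nat) :
  ((i%:R - j%:R) ^+ 2 : {poly int}) = (((i - j) + (j - i)) ^ 2)%N%:R.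
Proof.
rewrite natrX; case: (leqP i j) => h.
  rewrite (_ : (i - j)%N = 0%N); last by apply/eqP; rewrite subn_eq0.
  rewrite add0n -{1}(subnKC h) natrD; ring.
rewrite (_ : (j - i)%N = 0%N); last by apply/eqP; rewrite subn_eq0 ltnW.
rewrite addn0 -{1}(subnKC (ltnW h)) natrD; ring.
Qed.

Lemma key_pos (r : seq nat) (s : nat -> int) : (forall i, 0 <= s i) ->
  npos (\sum_(i <- r) \sum_(j <- r) (s i * s j) *:
     ('X^i * 'X^j * ('X *+ 2 + (i%:R - j%:R) ^+ 2))).
Proof.
move=> hs k; rewrite coef_sum; apply: sumr_ge0 => i _.
rewrite coef_sum; apply: sumr_ge0 => j _.
rewrite coefZ; apply: mulr_ge0; first exact: mulr_ge0.
rewrite sq_dist; apply: npos_mul; first exact: npos_mul (npos_Xn _) (npos_Xn _).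
apply: npos_add; last exact: npos_nat.
by apply: npos_natmul; have := npos_Xn 1; rewrite expr1.
Qed.

Lemma stirlingE n k : stirling2 n k = stir n k.
Proof. by apply: cnt_stir; rewrite cardsT card_ord. Qed.

Lemma bellE n : bell_poly n = \sum_(0 <= k < n.+1) (stir n k)%:R *: 'X^k.
Proof. by apply: eq_bigr => k _; rewrite stirlingE. Qed.

Lemma bellS n : bell_poly n.+1 = Tq (bell_poly n).
Proof.
rewrite !bellE Tq_sum big_nat_recl //= scale0r add0r.
under eq_bigr do rewrite natrD scalerDl.
rewrite big_split /=.
under [in RHS]eq_bigr do rewrite Tq_scale Tq_Xn mulrDr scalerDr.
rewrite big_split /= addrC; congr (_ + _).
  by apply: eq_bigr => i _; rewrite exprSr.
pose F k := (k * stir n k)%:R *: ('X^k : {poly int}).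
transitivity (\sum_(0 <= i < n.+1) F i.+1).
  by apply: eq_bigr => i _.
transitivity (\sum_(0 <= i < n.+1) F i); last first.
  by apply: eq_bigr => i _; rewrite /F mulr_natr -scalerMnr natrM -scalerA scaler_nat.
rewrite big_nat_recr //= big_nat_recl //= /F stir_big // muln0 mul0n ?mulr0n ?scale0r ?addr0 ?add0r //.
Qed.

Theorem proposition4p4 : q_log_convex bell_poly.
Proof.
move=> [|m] //= _ k.
rewrite !bellS.
set f := bell_poly m.
have fE : f = \sum_(i <- index_iota 0 m.+1) ((stir m i)%:R : int) *: 'X^i by rewrite /f bellE.
have := @key_pos (index_iota 0 m.+1) (fun i => (stir m i)%:R) (fun i => ler0n _ _) k.
rewrite -key -fE coefMn => h.
rewrite mulr2n in h; lra.
Qed.
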